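(* Let $G$ be a finite abstract simplicial complex and let $V=\{x\in G : |x|=1\}$. Then, as polynomials in $t$, $$ f_G(t)-1 = \sum_{v \in V} F_{S(v)}(t). $$
   Context: A finite abstract simplicial complex is a finite set of non-empty finite sets closed under taking non-empty subsets. For a complex $H$ of maximal dimension $d$ (maximal $|x|-1$), $f_k(H)$ is the number of elements of $H$ of cardinality $k+1$, and $f_H(t)=1+\sum_{k=0}^{d} f_k(H)\,t^{k+1}$ (so $f_H(t)=1$ for the empty complex); $F_H(t)=\int_0^t f_H(s)\,ds$. For $x\in G$: $U(x)=\{y\in G: x\subset y\}$, $B(x)=\{y\in G : y\subset z \text{ for some } z\in U(x)\}$, and the unit sphere $S(x)=B(x)\setminus U(x)$, which is again a simplicial complex. *)

(* Defs.v *)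
From HB Require Import structures.
From mathcomp Require Import all_boot all_order all_algebra.
Set Implicit Arguments. Unset Strict Implicit. Unset Printing Implicit Defensive.
Import Order.TTheory GRing.Theory Num.Theory.
Local Open Scope ring_scope.

Definition is_complex (T : finType) (G : {set {set T}}) : Prop :=
  set0 \notin G /\
  forall x y : {set T}, x \in G -> y \subset x -> y != set0 -> y \in G.

Definition fnum (T : finType) (H : {set {set T}}) (k : nat) : nat :=
  #|[set x in H | #|x| == k.+1]|.

(* f_H(t) = 1 + sum_k f_k(H) t^(k+1); every face has at most #|T| elements,
   so summing over k < #|T| covers all k <= dim H (extra terms are 0). *)
Definition fpoly (T : finType) (H : {set {set T}}) : {poly rat} :=
  1 + \sum_(k < #|T|) (fnum H k)%:R *: 'X^(k.+1).

Definition antider (p : {poly rat}) : {poly rat} :=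
  \poly_(i < (size p).+1) (if i is j.+1 then p`_j / (j.+1)%:R else 0).

Definition Fpoly (T : finType) (H : {set {set T}}) : {poly rat} :=
  antider (fpoly H).

Definition Ustar (T : finType) (G : {set {set T}}) (x : {set T}) :=
  [set y in G | x \subset y].
Definition Bstar (T : finType) (G : {set {set T}}) (x : {set T}) :=
  [set y in G | [exists z in Ustar G x, y \subset z]].
Definition Ssphere (T : finType) (G : {set {set T}}) (x : {set T}) :=
  Bstar G x :\: Ustar G x.

Definition vertices (T : finType) (G : {set {set T}}) :=
  [set x in G | #|x| == 1%N].

(* Main.v *)
Require Import Defs.
From mathcomp Require Import all_boot all_order all_algebra.
Import GRing.Theory.

Lemma inS (T : finType) (G : {set {set T}}) (a : T) (y : {set T}) :
  is_complex G ->
  (y \in Ssphere G [set a]) = [&& a \notin y, y != set0 & (a |: y) \in G].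
Proof.
case=> h0 hc; rewrite /Ssphere /Bstar /Ustar !inE sub1set.
apply/idP/idP.
- case/andP=> nU /andP[yG /existsP[z /andP[]]].
  rewrite inE sub1set => /andP[zG az] yz.
  have yn0 : y != set0 by apply: contraNneq h0 => <-.
  rewrite yG /= in nU; rewrite nU yn0 /=; apply: (hc z) => //.
    by rewrite subUset sub1set az.
  by apply/set0Pn; exists a; rewrite !inE eqxx.
- case/and3P=> ay yn0 aG.
  have yG : y \in G by apply: (hc (a |: y)) => //; apply: subsetUr.
  rewrite yG ay /=; apply/existsP; exists (a |: y).
  rewrite !inE aG /=; apply/andP; split; first by rewrite sub1set setU11.
  exact: subsetUr.
Qed.

Lemma card_link (T : finType) (G : {set {set T}}) (a : T) m :
  is_complex G ->
  #|[set y in Ssphere G [set a] | #|y| == m.+1]| =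
  #|[set x in G | ([set a] \subset x) && (#|x| == m.+2)]|.
Proof.
move=> hG.
rewrite -(@card_in_imset _ _ (fun y => a |: y)); last first.
  move=> y1 y2; rewrite inE inS // => /andP[/and3P[a1 _ _] _]; rewrite inE inS // => /andP[/and3P[a2 _ _] _] e.
  by rewrite -(setU1K a1) -(setU1K a2) e.
apply: eq_card => x; apply/imsetP/idP.
- case=> y; rewrite inE inS // => /andP[/and3P[ay _ aG] cy] ->.
  by rewrite inE aG sub1set setU11 cardsU1 ay (eqP cy) add1n eqxx.
- rewrite !inE sub1set => /and3P[xG ax cx]; exists (x :\ a); last by rewrite setD1K.
  rewrite inE inS // setD11 setD1K // xG /=.
  move: cx; rewrite (cardsD1 a) ax add1n eqSS => cx; rewrite cx andbT. apply/andP; split => //.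
  apply/set0Pn.
  have : 0 < #|x :\ a| by rewrite (eqP cx).
  by case/card_gt0P=> z zx; exists z.
Qed.

Lemma sum_link (T : finType) (G : {set {set T}}) m :
  is_complex G ->
  \sum_(v in vertices G) #|[set x in G | (v \subset x) && (#|x| == m.+2)]| =
  (fnum G m.+1 * m.+2)%N.
Proof.
case=> h0 hc.
under eq_bigr do rewrite -sum1_card.
rewrite (exchange_big_dep (fun x => x \in [set x in G | #|x| == m.+2])) /=; last first.
  by move=> v x _; rewrite !inE => /and3P[-> _ ->].
rewrite /fnum -sum_nat_const; apply: eq_bigr => x; rewrite inE => /andP[xG cx].
rewrite sum1dep_card; transitivity #|[set [set a] | a in x]|; last by rewrite (card_imset _ set1_inj) (eqP cx).
apply: eq_card => v; rewrite !inE; apply/idP/imsetP.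
- case/andP=> /andP[vG /cards1P[a ->]] /and3P[_ ax _]; exists a => //.
  by rewrite -sub1set.
- case=> a ax ->; rewrite cards1 eqxx sub1set ax xG cx !andbT /=.
  apply: (hc x) => //; first by rewrite sub1set.
  by apply/set0Pn; exists a; rewrite inE.
Qed.

Local Open Scope ring_scope.

Lemma fnum_big (T : finType) (H : {set {set T}}) j : (#|T| <= j)%N -> fnum H j = 0%N.
Proof.
move=> hj; apply/eqP; rewrite cards_eq0; apply/eqP/setP => x; rewrite !inE.
apply/negbTE; rewrite negb_and; apply/orP; right.
by rewrite neq_ltn (leq_ltn_trans (max_card _)) ?orbT // ltnS.
Qed.

Lemma coef_fpoly (T : finType) (H : {set {set T}}) i :
  (fpoly H)`_i = if i is j.+1 then (fnum H j)%:R else 1.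
Proof.
rewrite /fpoly coefD coef1 coef_sum.
under eq_bigr do rewrite coefZ coefXn.
case: i => [|j] /=.
  by rewrite big1 ?addr0 // => k _; rewrite mulr0.
rewrite add0r; under eq_bigr do rewrite eqSS. case: (ltnP j #|T|) => hj.
  rewrite (bigD1 (Ordinal hj)) //= eqxx mulr1 big1 ?addr0 // => k hk.
  by rewrite eq_sym -(inj_eq val_inj) /= in hk; rewrite (negbTE hk) mulr0.
rewrite fnum_big // big1 // => k _.
by rewrite gtn_eqF ?mulr0 // (leq_trans (ltn_ord k)).
Qed.

Lemma coef_antider p i :
  (antider p)`_i = if i is j.+1 then p`_j / (j.+1)%:R else 0.
Proof.
rewrite /antider coef_poly; case: ltnP => //= hi.
case: i hi => // j hj; rewrite ltnS in hj.
by rewrite nth_default // mul0r.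
Qed.

Theorem mainTheorem8 (T : finType) (G : {set {set T}}) :
  is_complex G ->
  fpoly G - 1 = \sum_(v in vertices G) Fpoly (Ssphere G v).
Proof.
move=> hG; apply/polyP => i.
rewrite coefB coef1 coef_sum coef_fpoly.
under eq_bigr do rewrite /Fpoly coef_antider.
case: i => [|j] /=; first by rewrite subrr big1.
rewrite subr0; under eq_bigr do rewrite coef_fpoly.
case: j => [|m] /=.
  by rewrite sumr_const divr1 /fnum.
rewrite -mulr_suml -natr_sum.
have -> : (\sum_(v in vertices G) fnum (Ssphere G v) m = fnum G m.+1 * m.+2)%N.
  rewrite -(sum_link _ _ m hG); apply: eq_bigr => v.
  rewrite inE => /andP[_ /cards1P[a ->]]; exact: (card_link _ _ _ _ hG).
by rewrite natrM mulfK // Num.Theory.pnatr_eq0.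
Qed.
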